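(* For every integer $n\ge 3$, the crown graph $K_{n,n}\setminus M$, where $M$ is a perfect matching, is a distance-transitive graph of diameter $3$ with intersection array $\{n-1,n-2,1;1,n-2,n-1\}$. Coloring each pair of distinct vertices by $b$, $a$, $c$ according as their distance is $1$, $2$, $3$ yields a representation of the relation algebra $26_{65}$ on $2n$ vertices, and this representation is algebraic.
   Context: A connected graph is distance-transitive if whenever $\operatorname{dist}(x,y)=\operatorname{dist}(u,v)$ some automorphism maps $x\mapsto u$, $y\mapsto v$. A distance-regular graph of diameter $3$ has intersection array $\{b_0,b_1,b_2;c_1,c_2,c_3\}$ where, for $\operatorname{dist}(x,y)=i$, $b_i$ (resp. $c_i$) is the number of neighbours of $y$ at distance $i+1$ (resp. $i-1$) from $x$. A cycle type is the multiset of colors of the sides of a triangle, e.g. $abb$ = one side $a$, two sides $b$. $26_{65}$ is the finite symmetric integral relation algebra with atoms $1',a,b,c$ whose mandatory diversity cycle types are exactly $aaa, abb, abc$ (all of $bbb,ccc,baa,acc,caa,bcc,cbb$ forbidden). A representation on a set $X$ is a coloring of all 2-element subsets of $X$ by $a,b,c$, each color used, such that: for every mandatory type $\{h,i,j\}$, every edge $\{x,y\}$ colored $h$ (for each choice of $h$ among the type's colors) and each ordering $(i,j)$ of the remaining two colors, some $z$ has $\{x,z\}$ colored $i$, $\{z,y\}$ colored $j$; and no triangle of a forbidden type occurs. A representation on a finite set is algebraic if each color class (viewed as a set of ordered pairs, together with the diagonal as the identity class) is a single orbit on ordered pairs of the group of color-preserving permutations of $X$. *)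

(* Defs.v *)
From HB Require Import structures.
From mathcomp Require Import all_boot all_order all_fingroup.
Set Implicit Arguments. Unset Strict Implicit. Unset Printing Implicit Defensive.

Section Graphs.
Variable T : finType.
Variable e : rel T.

Definition walkb (x y : T) (k : nat) : bool :=
  [exists p : k.-tuple T, path e x p && (last x p == y)].

Definition distb (x y : T) (k : nat) : bool :=
  walkb x y k && [forall j : 'I_k, ~~ walkb x y j].

Definition connected_graph : Prop := forall x y : T, exists k, distb x y k.

Definition is_graph_aut (g : {perm T}) : Prop :=
  forall x y : T, e (g x) (g y) = e x y.

Definition distance_transitive : Prop :=
  connected_graph /\
  forall (x y u v : T) (k : nat), distb x y k -> distb u v k ->
    exists g : {perm T}, is_graph_aut g /\ g x = u /\ g y = v.

Definition diameter_is (d : nat) : Prop :=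
  (forall x y : T, exists2 k, k <= d & distb x y k) /\
  (exists x y : T, distb x y d).

Definition intersection_array3 (b0 b1 b2 c1 c2 c3 : nat) : Prop :=
  diameter_is 3 /\
  forall (x y : T) (i : nat),
    distb x y i ->
    (#|[set z | e y z & distb x z i.+1]| = nth 0 [:: b0; b1; b2; 0] i) /\
    (#|[set z | e y z & distb x z i.-1]| = nth 0 [:: 0; c1; c2; c3] i).
End Graphs.

(* vertices (i, side); the removed perfect matching is {(i,false),(i,true)} *)
Definition crown_adj (n : nat) : rel ('I_n * bool) :=
  fun x y => (x.2 != y.2) && (x.1 != y.1).

Arguments crown_adj : clear implicits.

Inductive color := ca | cb | cc.

Definition color_eqb (u v : color) : bool :=
  match u, v with
  | ca, ca | cb, cb | cc, cc => true
  | _, _ => false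
  end.

Lemma color_eqP : Equality.axiom color_eqb.
Proof. by case; case; constructor. Qed.

HB.instance Definition _ := hasDecEq.Build color color_eqP.

(* the mandatory diversity cycle types of 26_65 : aaa, abb, abc
   (as multisets of the three side colors) *)
Definition mandatory26_65 (h i j : color) : bool :=
  [|| perm_eq [:: h; i; j] [:: ca; ca; ca],
      perm_eq [:: h; i; j] [:: ca; cb; cb] |
      perm_eq [:: h; i; j] [:: ca; cb; cc]].

Definition forbidden26_65 (h i j : color) : bool := ~~ mandatory26_65 h i j.

Section Representation.
Variable X : finType.
Variable col : X -> X -> color.  (* only used on pairs of distinct points *)

Definition representation26_65 : Prop :=
  (* a coloring of 2-element subsets *)
  (forall x y : X, x != y -> col x y = col y x) /\
  (forall h : color, exists x y : X, x != y /\ col x y = h) /\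
  (forall (h i j : color), mandatory26_65 h i j ->
     forall x y : X, x != y -> col x y = h ->
       exists z : X, [/\ z != x, z != y, col x z = i & col z y = j]) /\
  (forall x y z : X, x != y -> y != z -> x != z ->
     ~~ forbidden26_65 (col x y) (col y z) (col x z)).

Definition color_preserving (g : {perm X}) : Prop :=
  forall x y : X, x != y -> col (g x) (g y) = col x y.

(* each color class (as a set of ordered pairs), and the diagonal,
   is a single orbit of the group of color-preserving permutations *)
Definition algebraic_rep : Prop :=
  (forall x u : X, exists g : {perm X}, color_preserving g /\ g x = u) /\
  (forall h : color, exists x y : X, x != y /\ col x y = h) /\
  (forall x y u v : X, x != y -> u != v -> col x y = col u v ->
     exists g : {perm X}, color_preserving g /\ g x = u /\ g y = v).
End Representation.

(* coloring by graph distance: b for 1, a for 2, c for 3 (and, vacuously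
   given diameter 3, any other value) *)
Definition dist_color (T : finType) (e : rel T) (x y : T) : color :=
  if distb e x y 1 then cb else if distb e x y 2 then ca else cc.

(* Main.v *)
Require Import Defs.
From mathcomp Require Import all_boot all_order all_fingroup.
Set Implicit Arguments. Unset Strict Implicit. Unset Printing Implicit Defensive.

Definition dd (p s : bool) : nat :=
  match p, s with
  | true, true => 0 | false, false => 1 | false, true => 2 | true, false => 3 end.

Lemma crown_parity n (x : 'I_n * bool) (p : seq ('I_n * bool)) :
  path (crown_adj n) x p -> (last x p).2 = x.2 (+) odd (size p).
Proof.
elim: p x => [|z p IH] x /=; first by rewrite addbF.
move=> /andP[/andP[hs _] hp]; rewrite IH //.
by move: hs; case: (x.2); case: (z.2) => //= _; case: odd.
Qed.

Lemma walkb0 (T : finType) (e : rel T) x y : walkb e x y 0 = (x == y).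
Proof.
rewrite /walkb; apply/idP/idP => [/existsP[p]|/eqP<-]; first by rewrite tuple0 /=.
by apply/existsP; exists [tuple]; rewrite /=.
Qed.

Lemma walkb1 (T : finType) (e : rel T) x y : walkb e x y 1 = e x y.
Proof.
rewrite /walkb; apply/idP/idP => [/existsP[p]|h].
  by case/tupleP: p => z p; rewrite tuple0 /= andbT => /andP[h /eqP<-].
by apply/existsP; exists [tuple y]; rewrite /= h eqxx.
Qed.

Lemma walk_seq (T : finType) (e : rel T) x y (p : seq T) :
  path e x p -> last x p = y -> walkb e x y (size p).
Proof. by move=> hp hl; apply/existsP; exists (in_tuple p); rewrite /= hp hl eqxx. Qed.

Lemma walk_par n (x y : 'I_n * bool) k :
  walkb (crown_adj n) x y k -> y.2 = x.2 (+) odd k.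
Proof.
rewrite /walkb; case/existsP=> p /andP[hp /eqP hl].
by rewrite -hl crown_parity // size_tuple.
Qed.

Lemma third n (hn : 3 <= n) (a b : 'I_n) : exists c : 'I_n, (c != a) && (c != b).
Proof.
have : 0 < #|~: [set a; b]|.
  rewrite cardsCs card_ord setCK; have := cards2 a b.
  by case: (a == b) => -> /=; rewrite subn_gt0 ?(leq_trans _ hn).
case/card_gt0P => c; rewrite !inE => /norP[h1 h2]; exists c; by rewrite h1 h2.
Qed.

Lemma walk_dd n (hn : 3 <= n) (x y : 'I_n * bool) :
  walkb (crown_adj n) x y (dd (x.1 == y.1) (x.2 == y.2)).
Proof.
case: x y => [a s] [b t] /=.
case: (eqVneq a b) => [<-|ab]; case: (eqVneq s t) => [<-|st] /=.
- by rewrite walkb0.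
- have [c /andP[ca _]] := third hn a a.
  have [d /andP[da dc]] := third hn a c.
  have -> : 3 = size [:: (c, t); (d, s); (a, t)] by [].
  apply: walk_seq => //=; rewrite /crown_adj /=.
  move: st; case: s; case: t => //= _; by rewrite !andbT (eq_sym a c) ca (eq_sym c d) dc da.
- have [c /andP[ca cb]] := third hn a b.
  have -> : 2 = size [:: (c, ~~ s); (b, s)] by [].
  apply: walk_seq => //=; rewrite /crown_adj /=.
  by case: s; rewrite /= !andbT eq_sym ca cb.
- by rewrite /= walkb1 /crown_adj /= st ab.
Qed.

Lemma nowalk_dd n (x y : 'I_n * bool) j :
  j < dd (x.1 == y.1) (x.2 == y.2) -> ~~ walkb (crown_adj n) x y j.
Proof.
case: x y => [a s] [b t] /=.
case: (eqVneq a b) => [<-|ab]; case: (eqVneq s t) => [<-|st] //=.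
- case: j => [|[|[|j]]] // _.
  + by rewrite walkb0 xpair_eqE /= (negbTE st) andbF.
  + by rewrite walkb1 /crown_adj /= eqxx andbF.
  + by apply/negP => /walk_par /=; rewrite addbF => h; rewrite h eqxx in st.
- case: j => [|[|j]] // _.
  + by rewrite walkb0 xpair_eqE /= (negbTE ab).
  + by apply/negP => /walk_par /=; case: s.
- case: j => [|j] // _.
  by rewrite walkb0 xpair_eqE /= (negbTE ab).
Qed.

Lemma distbE n (hn : 3 <= n) (x y : 'I_n * bool) k :
  distb (crown_adj n) x y k = (k == dd (x.1 == y.1) (x.2 == y.2)).
Proof.
apply/andP/eqP => [[hw /forallP hf]|->].
  apply/eqP; rewrite eqn_leq; apply/andP; split.
    rewrite leqNgt; apply/negP => lt.
    by have := hf (Ordinal lt); rewrite walk_dd.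
  by rewrite leqNgt; apply/negP => lt; move: (nowalk_dd lt); rewrite hw.
split; first exact: walk_dd.
by apply/forallP => j; apply: nowalk_dd.
Qed.

Lemma card_side n (Q : pred ('I_n * bool)) (P : pred 'I_n) s :
  (forall k u, Q (k,u) = (u == s) && P k) -> #|[set z | Q z]| = #|[set k | P k]|.
Proof.
move=> hQ; have -> : [set z | Q z] = setX [set k | P k] [set s].
  by apply/setP => -[k u]; rewrite !inE hQ andbC.
by rewrite cardsX cards1 muln1.
Qed.

Lemma card_neq1 n (a : 'I_n) : #|[set k : 'I_n | k != a]| = n.-1.
Proof.
have -> : [set k | k != a] = [set~ a] by apply/setP=> k; rewrite !inE.
by rewrite cardsC1 card_ord.
Qed.

Lemma card_neq2 n (a b : 'I_n) : a != b -> #|[set k : 'I_n | (k != a) && (k != b)]| = n - 2.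
Proof.
move=> ab; have -> : [set k | (k != a) && (k != b)] = ~: [set a; b].
  by apply/setP=> k; rewrite !inE negb_or.
by rewrite cardsCs setCK cards2 ab card_ord.
Qed.

Lemma card_eq1 n (a : 'I_n) : #|[set k : 'I_n | k == a]| = 1.
Proof.
have -> : [set k : 'I_n | k == a] = [set a] by apply/setP=> k; rewrite !inE.
by rewrite cards1.
Qed.

Lemma card_f n : #|[set k : 'I_n | false]| = 0.
Proof. exact: cards0. Qed.

Ltac fin k a b s t u :=
  rewrite ?(eq_sym a k) ?(eq_sym b k);
  try (match goal with ab : is_true (negb (@eq_op _ a b)) |- _ =>
    have : ~~ ((k == a) && (k == b)) by
      apply/negP => /andP[/eqP -> /eqP ?]; subst; by rewrite eqxx in ab end);
  repeat match goal with H : is_true (negb (@eq_op _ _ _)) |- _ => move: H end;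
  case: (k == a); case: (k == b); case: s; case: t; case: u; by [].

Lemma inter n (hn : 3 <= n) :
  forall (x y : 'I_n * bool) (i : nat),
    distb (crown_adj n) x y i ->
    (#|[set z | crown_adj n y z & distb (crown_adj n) x z i.+1]| = nth 0 [:: n.-1; n - 2; 1; 0] i) /\
    (#|[set z | crown_adj n y z & distb (crown_adj n) x z i.-1]| = nth 0 [:: 0; 1; n - 2; n.-1] i).
Proof.
move=> [a s] [b t] i; rewrite distbE // => /eqP -> /=.
case: (eqVneq a b) => [<-|ab]; case: (eqVneq s t) => [<-|st] /=.
  all: split.
  - rewrite (@card_side n _ (fun k => k != a) (~~ s)) ?card_neq1 //.
    move=> k u; rewrite /crown_adj distbE //=.
    fin k a b s t u.
  - rewrite (@card_side n _ (fun k => false) s) ?card_f //.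
    move=> k u; rewrite /crown_adj distbE //=.
    fin k a b s t u.
  - rewrite (@card_side n _ (fun k => false) s) ?card_f //.
    move=> k u; rewrite /crown_adj distbE //=.
    fin k a b s t u.
  - rewrite (@card_side n _ (fun k => k != a) s) ?card_neq1 //.
    move=> k u; rewrite /crown_adj distbE //=.
    fin k a b s t u.
  - rewrite (@card_side n _ (fun k => k == a) (~~ s)) ?card_eq1 //.
    move=> k u; rewrite /crown_adj distbE //=.
    fin k a b s t u.
  - rewrite (@card_side n _ (fun k => (k != a) && (k != b)) (~~ s)) ?card_neq2 //.
    move=> k u; rewrite /crown_adj distbE //=.
    fin k a b s t u.
  - rewrite (@card_side n _ (fun k => (k != a) && (k != b)) s) ?card_neq2 //.
    move=> k u; rewrite /crown_adj distbE //=.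
    fin k a b s t u.
  - rewrite (@card_side n _ (fun k => k == a) s) ?card_eq1 //.
    move=> k u; rewrite /crown_adj distbE //=.
    fin k a b s t u.
Qed.

Definition cf (p s : bool) : color :=
  if 1 == dd p s then cb else if 2 == dd p s then ca else cc.

Lemma colE n (hn : 3 <= n) (x y : 'I_n * bool) :
  dist_color (crown_adj n) x y = cf (x.1 == y.1) (x.2 == y.2).
Proof. by rewrite /dist_color !distbE. Qed.

Lemma idx_perm n (a b a' b' : 'I_n) : (a == b) = (a' == b') ->
  exists s : {perm 'I_n}, s a = a' /\ s b = b'.
Proof.
move=> h; exists (tperm a a' * tperm (tperm a a' b) b')%g.
rewrite !permM tpermL.
case: (eqVneq a b) h => [<-|ab] h.
  by move/esym/eqP: h => <-; rewrite tpermL tpermR.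
split; last by rewrite tpermL.
apply: tpermD; last by rewrite eq_sym -h.
by rewrite -[X in _ != X](tpermL a a') (inj_eq perm_inj) eq_sym.
Qed.

Definition cfun n (s : {perm 'I_n}) (f : bool) (x : 'I_n * bool) : 'I_n * bool :=
  (s x.1, x.2 (+) f).

Lemma cfun_inj n s f : injective (@cfun n s f).
Proof.
move=> [a p] [b q] [/perm_inj -> h]; congr pair.
by move: h; case: f p q => [] [] [].
Qed.

Lemma crown_perm n (x y u v : 'I_n * bool) :
  (x.1 == y.1) = (u.1 == v.1) -> (x.2 == y.2) = (u.2 == v.2) ->
  exists g : {perm 'I_n * bool},
    (forall z w, ((g z).1 == (g w).1) = (z.1 == w.1) /\ ((g z).2 == (g w).2) = (z.2 == w.2))
    /\ g x = u /\ g y = v.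
Proof.
case: u v => [u1 u2] [v1 v2] /= h1 h2; have [s [sx sy]] := idx_perm h1.
exists (perm (@cfun_inj n s (x.2 (+) u2))); split.
  move=> z w; rewrite !permE /= (inj_eq perm_inj); split => //.
  by case: (z.2); case: (w.2); case: (x.2); case: (u2) h2.
rewrite !permE /cfun /= sx sy; split; congr pair.
  by move: h2; case: (x.2); case: u2.
by move: h2; case: (x.2); case: u2; case: (y.2); case: v2.
Qed.

Lemma dd_inj p s p' s' : dd p s = dd p' s' -> p = p' /\ s = s'.
Proof. by case: p s p' s' => [] [] [] []. Qed.

Lemma cf_inj p s p' s' : ~~ (p && s) -> ~~ (p' && s') -> cf p s = cf p' s' -> p = p' /\ s = s'.
Proof. by case: p s p' s' => [] [] [] []. Qed.

Lemma neq_pair n (x y : 'I_n * bool) : (x != y) = ~~ ((x.1 == y.1) && (x.2 == y.2)).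
Proof. by case: x y => [? ?] [? ?]; rewrite xpair_eqE. Qed.

Lemma idx_w n (hn : 3 <= n) (a b : 'I_n) p1 p2 :
  (p1 && p2 ==> (a == b)) -> ((a == b) ==> (p1 == p2)) ->
  exists c, ((a == c) = p1) /\ ((c == b) = p2).
Proof.
case: p1; case: p2 => /= h1 h2.
- by exists a; rewrite eqxx h1.
- by exists a; rewrite eqxx; move: h2; case: (a == b).
- by exists b; rewrite eqxx; move: h2; case: (a == b).
- have [c /andP[ca cb]] := third hn a b.
  by exists c; rewrite eq_sym (negbTE ca) (negbTE cb).
Qed.

Lemma side_w (s t s1 s2 : bool) : (s == t) == (s1 == s2) ->
  exists u, ((s == u) = s1) /\ ((u == t) = s2).
Proof.
move=> H; exists (if s1 then s else ~~ s).
by move: H; case: s t s1 s2 => [] [] [] [].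
Qed.

Definition rel_of (c : color) : bool * bool :=
  match c with ca => (false, true) | cb => (false, false) | cc => (true, false) end.

Lemma key_mand e1 e2 h i j : mandatory26_65 h i j -> cf e1 e2 = h -> ~~ (e1 && e2) ->
  [&& (rel_of i).1 && (rel_of j).1 ==> e1, e1 ==> ((rel_of i).1 == (rel_of j).1),
      (e2 == ((rel_of i).2 == (rel_of j).2)),
      cf (rel_of i).1 (rel_of i).2 == i, cf (rel_of j).1 (rel_of j).2 == j,
      ~~ ((rel_of i).1 && (rel_of i).2) & ~~ ((rel_of j).1 && (rel_of j).2)].
Proof. by case: e1 e2 h i j => [] [] [] [] []. Qed.

Lemma key_tri (p q r s t u : bool) : (p && q ==> r) -> (p && r ==> q) -> (q && r ==> p) ->
  ~~ (p && (s == t)) -> ~~ (q && (t == u)) -> ~~ (r && (s == u)) ->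
  mandatory26_65 (cf p (s == t)) (cf q (t == u)) (cf r (s == u)).
Proof. by case: p q r s t u => [] [] [] [] [] []. Qed.

Lemma colors_used n (hn : 3 <= n) :
  forall h : color, exists x y : 'I_n * bool, x != y /\ dist_color (crown_adj n) x y = h.
Proof.
have i0 : 'I_n := Ordinal (leq_trans (isT : 0 < 3) hn).
have [i1 /andP[i10 _]] := third hn i0 i0.
case.
- by exists (i0, true), (i1, true); rewrite colE // neq_pair /= eq_sym (negbTE i10).
- by exists (i0, true), (i1, false); rewrite colE // neq_pair /= eq_sym (negbTE i10).
- by exists (i0, true), (i0, false); rewrite colE // neq_pair /= eqxx.
Qed.

Theorem mainTheorem8 (n : nat) (hn : 3 <= n) :
  distance_transitive (crown_adj n) /\
  intersection_array3 (crown_adj n) n.-1 (n - 2) 1 1 (n - 2) n.-1 /\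
  #|{: 'I_n * bool}| = 2 * n /\
  representation26_65 (dist_color (crown_adj n)) /\
  algebraic_rep (dist_color (crown_adj n)).
Proof.
have conn : connected_graph (crown_adj n).
  by move=> x y; exists (dd (x.1 == y.1) (x.2 == y.2)); rewrite distbE.
have DT : distance_transitive (crown_adj n).
  split => // x y u v k; rewrite !distbE // => /eqP -> /eqP /dd_inj [h1 h2].
  have [g [hg [gx gy]]] := crown_perm h1 h2.
  exists g; split => //.
  by move=> z w; rewrite /crown_adj; have [-> ->] := hg z w.
have DI : diameter_is (crown_adj n) 3.
  split.
    move=> x y; exists (dd (x.1 == y.1) (x.2 == y.2)); last by rewrite distbE.
    by case: (x.1 == y.1); case: (x.2 == y.2).
  have i0 : 'I_n := Ordinal (leq_trans (isT : 0 < 3) hn).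
  by exists (i0, true); exists (i0, false); rewrite distbE //= eqxx.
have IA : intersection_array3 (crown_adj n) n.-1 (n - 2) 1 1 (n - 2) n.-1.
  by split => //; exact: inter.
have CA : #|{: 'I_n * bool}| = 2 * n.
  by rewrite card_prod card_ord card_bool mulnC.
have RP : representation26_65 (dist_color (crown_adj n)).
  split; [|split; [exact: colors_used|split]].
  + by move=> x y _; rewrite !colE // (eq_sym x.1) (eq_sym x.2).
  + move=> h i j hm x y xy hxy.
    rewrite colE // in hxy; rewrite neq_pair in xy.
    case/and5P: (key_mand hm hxy xy) => k1 k2 k3 k4 /and3P[k5 k6 k7].
    have [c [hc1 hc2]] := idx_w hn k1 k2.
    have [u [hu1 hu2]] := side_w k3.
    exists (c, u); rewrite !neq_pair !colE //= eq_sym hc1 hc2 (eq_sym u) hu1 hu2.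
    by rewrite k6 k7 (eqP k4) (eqP k5).
  + move=> [a s] [b t] [c u]; rewrite !neq_pair !colE //= => h1 h2 h3.
    rewrite /forbidden26_65 negbK; apply: key_tri => //.
    * by apply/implyP => /andP[/eqP -> /eqP ->]; rewrite ?eqxx.
    * by apply/implyP => /andP[/eqP -> /eqP ->]; rewrite ?eqxx.
    * by apply/implyP => /andP[/eqP -> /eqP <-]; rewrite ?eqxx.
have AL : algebraic_rep (dist_color (crown_adj n)).
  split; [|split; [exact: colors_used|]].
  + move=> x u; have [g [hg [gx _]]] := @crown_perm n x x u u (etrans (eqxx _) (esym (eqxx _))) (etrans (eqxx _) (esym (eqxx _))).
    exists g; split => // z w _.
    by rewrite !colE //; have [-> ->] := hg z w.
  + move=> x y u v xy uv; rewrite !colE // => /cf_inj.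
    rewrite -!neq_pair => /(_ xy uv) [h1 h2].
    have [g [hg [gx gy]]] := crown_perm h1 h2.
    exists g; split => // z w _.
    by rewrite !colE //; have [-> ->] := hg z w.
by [].
Qed.
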